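(* Let $p$ be a prime number, let $X$ be a nonempty totally ordered set, and let $s$ be an integer with $1\leq s<p$. Then the images of the Lyndon words of length $s$ over $X$ generate the $\mathbb{Z}/p$-module $\mathrm{Sh}_{\mathbb{Z}}(X)_{\mathrm{indec},s}\otimes(\mathbb{Z}/p)$.
   Context: $X^*$ is the free monoid on $X$, whose elements are regarded as associative words in the alphabet $X$; $|w|$ denotes the length of a word $w$, and $X^s$ the set of words of length $s$. $X^*$ carries the alphabetical (lexicographic) order induced by the total order on $X$. A nonempty word $w$ is a Lyndon word if it is strictly smaller in this order than all its nontrivial proper right factors (suffixes). $\mathbb{Z}\langle X\rangle$ is the free $\mathbb{Z}$-module with basis $X^*$, graded by word length. The shuffle product of words $u=(x_1\cdots x_r)$ and $v=(x_{r+1}\cdots x_{r+t})$ is $u\,ш\,v=\sum_\sigma (x_{\sigma(1)}\cdots x_{\sigma(r+t)})$, summing over all permutations $\sigma$ of $1,\dots,r+t$ with $\sigma(1)<\cdots<\sigma(r)$ and $\sigma(r+1)<\cdots<\sigma(r+t)$; extended bilinearly it makes $\mathbb{Z}\langle X\rangle$ into the shuffle algebra $\mathrm{Sh}_{\mathbb{Z}}(X)$. Let $M$ be the $\mathbb{Z}$-submodule of $\mathbb{Z}\langle X\rangle$ generated by all $u\,ш\,v$ with $u,v\in X^*$ nonempty words. The indecomposable quotient is $\mathrm{Sh}_{\mathbb{Z}}(X)_{\mathrm{indec}}=\mathbb{Z}\langle X\rangle/M$, graded by word length; $\mathrm{Sh}_{\mathbb{Z}}(X)_{\mathrm{indec},s}$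 is its degree-$s$ component, and the ''image'' of a word $w\in X^s$ means the image of $w$ under $\mathbb{Z}\langle X\rangle_s\to \mathrm{Sh}_{\mathbb{Z}}(X)_{\mathrm{indec},s}\to \mathrm{Sh}_{\mathbb{Z}}(X)_{\mathrm{indec},s}\otimes(\mathbb{Z}/p)$. *)

(* Defs.v *)
From HB Require Import structures.
From mathcomp Require Import all_boot all_order all_algebra.
From mathcomp.multinomials Require Import freeg.
Set Implicit Arguments. Unset Strict Implicit. Unset Printing Implicit Defensive.
Import Order.TTheory GRing.Theory Num.Theory.
Local Open Scope ring_scope.

Section Shuffle.
Variables (d : Order.disp_t) (X : orderType d).

Fixpoint lex_lt (u v : seq X) : bool :=
  match u, v with
  | [::], [::] => false
  | [::], _ :: _ => true
  | _ :: _, [::] => false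
  | a :: u', b :: v' => (a < b)%O || ((a == b) && lex_lt u' v')
  end.

Definition lyndon (w : seq X) : bool :=
  (0 < size w)%N && [forall i : 'I_(size w), (0 < i)%N ==> lex_lt w (drop i w)].

Definition Zword := {freeg (seq X) / int}.

Fixpoint shuffles (u v : seq X) : seq (seq X) :=
  let fix shv (v : seq X) : seq (seq X) :=
    match u, v with
    | [::], _ => [:: v]
    | _, [::] => [:: u]
    | a :: u', b :: v' =>
        [seq a :: w | w <- shuffles u' v] ++ [seq b :: w | w <- shv v']
    end in shv v.

Definition shuffle (u v : seq X) : Zword :=
  \sum_(w <- shuffles u v) << w >>.

Definition in_M (x : Zword) : Prop :=
  exists l : seq (int * (seq X * seq X)),
    all (fun t => (0 < size t.2.1)%N && (0 < size t.2.2)%N) l /\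
    x = \sum_(t <- l) (shuffle t.2.1 t.2.2 *~ t.1).

Definition homog (s : nat) (x : Zword) : Prop :=
  forall w : seq X, size w != s -> coeff w x = 0.

(* The images of the Lyndon words of length s generate
   Sh_Z(X)_{indec,s} (x) Z/p = Z<X>_s / (M_s + p Z<X>_s):
   every element of Z<X>_s is congruent, modulo M + p Z<X>, to an integral
   linear combination of Lyndon words of length s. *)
Definition lyndon_generate_mod (p s : nat) : Prop :=
  forall f : Zword, homog s f ->
    exists (c : seq (int * seq X)) (m g : Zword),
      all (fun t => lyndon t.2 && (size t.2 == s)) c /\ in_M m /\
      f = \sum_(t <- c) (<< t.2 >> *~ t.1) + m + g *+ p.

End Shuffle.

(* Main.v *)
Require Import Defs.
From HB Require Import structures.
From mathcomp Require Import all_boot all_order all_algebra.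
From mathcomp.multinomials Require Import freeg.
From mathcomp Require Import zify.
Set Implicit Arguments. Unset Strict Implicit. Unset Printing Implicit Defensive.
Import Order.TTheory.

Lemma ar1 (a b c : nat) : a = b + (a + c) -> b = 0. Proof. lia. Qed.
Lemma ar2 (a b n : nat) : a + b < n.+1 -> 0 < a -> b < n. Proof. lia. Qed.
Lemma ar3 (a b n : nat) : a + b < n.+1 -> 0 < b -> a < n. Proof. lia. Qed.

Lemma ar4 (t w : nat) : 0 < t -> t <= w -> w - t < w. Proof. lia. Qed.
Lemma ar5 (i n : nat) : 0 < i -> i < n -> n - i = n -> False. Proof. lia. Qed.

Section Words.
Variables (d : Order.disp_t) (X : orderType d).
Implicit Types (a b c e : X) (u v w x y z p q r s t : seq X).

Notation llt := (@lex_lt d X).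

Lemma llt_cons a b u v : llt (a :: u) (b :: v) = (a < b)%O || ((a == b) && llt u v).
Proof. by []. Qed.

Lemma llt_irr u : ~~ llt u u.
Proof. by elim: u => //= a u IH; rewrite Order.POrderTheory.ltxx eqxx /= IH. Qed.

Lemma llt_trans u v w : llt u v -> llt v w -> llt u w.
Proof.
elim: u v w => [|a u IH] [|b v] [|c w] //=.
case/orP=> [ab|/andP[/eqP<- uv]]; case/orP=> [bc|/andP[/eqP<- vw]].
- by rewrite (Order.POrderTheory.lt_trans ab bc).
- by rewrite ab.
- by rewrite bc.
- by rewrite eqxx (IH _ _ uv vw) orbT.
Qed.

Lemma llt_total u v : [|| llt u v, u == v | llt v u].
Proof.
elim: u v => [|a u IH] [|b v] //=.
case: (ltgtP a b) => [ab|ba|->] //=; first by rewrite orbT.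
rewrite eqseq_cons eqxx /=; exact: IH.
Qed.

Lemma llt_asym u v : llt u v -> ~~ llt v u.
Proof. by move=> uv; apply/negP=> vu; move: (llt_trans uv vu); rewrite (negbTE (llt_irr u)). Qed.

Lemma nllt_lt u v : ~~ llt u v -> u != v -> llt v u.
Proof. by move: (llt_total u v) => /or3P[->|/eqP->|->] //; rewrite eqxx. Qed.

Lemma le_lt_trans u v w : ~~ llt v u -> llt v w -> llt u w.
Proof.
move=> vu vw; case: (eqVneq u v) => [e|uv]; first by rewrite e.
by apply: (llt_trans _ vw); apply: nllt_lt vu _; rewrite eq_sym.
Qed.

Lemma lt_le_trans u v w : llt u v -> ~~ llt w v -> llt u w.
Proof.
move=> uv wv; case: (eqVneq v w) => [e|vw]; first by rewrite -e.
by apply: (llt_trans uv); apply: nllt_lt wv _; rewrite eq_sym.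
Qed.

Lemma le_trans u v w : ~~ llt v u -> ~~ llt w v -> ~~ llt w u.
Proof.
move=> vu wv; apply/negP => wu.
case: (eqVneq v w) => [e|vw]; first by move: vu; rewrite e wu.
by move: (llt_trans (nllt_lt wv (contra_neq (@esym _ _ _) vw)) wu); rewrite (negbTE vu).
Qed.

Lemma llt_catl p u v : llt (p ++ u) (p ++ v) = llt u v.
Proof. by elim: p => //= a p IH; rewrite Order.POrderTheory.ltxx eqxx IH. Qed.

Lemma llt_prefix u r : llt u (u ++ r) = (r != [::]).
Proof. elim: u => [|a u IH] /=; first by case: r. by rewrite Order.POrderTheory.ltxx eqxx. Qed.

Lemma nllt_prefix u r : ~~ llt (u ++ r) u.
Proof. elim: u => [|a u IH] /=; first by case: r. by rewrite Order.POrderTheory.ltxx eqxx. Qed.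

Lemma llt_split u v : llt u v ->
  (exists2 r, r != [::] & v = u ++ r) \/ (forall x y, llt (u ++ x) (v ++ y)).
Proof.
elim: u v => [|a u IH] [|b v] //=.
  by move=> _; left; exists (b :: v).
case/orP=> [ab|/andP[/eqP<- uv]]; first by right=> x y; rewrite /= ab.
case: (IH _ uv) => [[r r0 ->]|H]; first by left; exists r.
by right=> x y /=; rewrite eqxx H orbT.
Qed.

Lemma llt_catr u v z : llt u v -> llt u (v ++ z).
Proof.
case/llt_split => [[r r0 ->]|H]; last by rewrite -[u]cats0 H.
by rewrite -catA llt_prefix; case: r r0.
Qed.

Lemma llt_first a b u v : llt (a :: u) (b :: v) -> ~~ (b < a)%O.
Proof.
case/orP=> [ab|/andP[/eqP-> _]]; last by rewrite Order.POrderTheory.ltxx.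
by rewrite Order.POrderTheory.lt_gtF.
Qed.


Lemma shuffles_cons a b u v : shuffles (a :: u) (b :: v) =
  [seq a :: t | t <- shuffles u (b :: v)] ++ [seq b :: t | t <- shuffles (a :: u) v].
Proof. by []. Qed.

Lemma shuffles0s v : shuffles [::] v = [:: v]. Proof. by case: v. Qed.
Lemma shuffless0 u : shuffles u [::] = [:: u]. Proof. by case: u. Qed.

Definition lmax x y := if llt x y then y else x.

Fixpoint MS (u v : seq X) : seq X :=
  let fix Mv (v : seq X) : seq X :=
    match u, v with
    | [::], _ => v
    | _, [::] => u
    | a :: u', b :: v' => lmax (a :: MS u' v) (b :: Mv v')
    end in Mv v.

Lemma MS_cons a b u v : MS (a :: u) (b :: v) = lmax (a :: MS u (b :: v)) (b :: MS (a :: u) v).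
Proof. by []. Qed.
Lemma MS0s v : MS [::] v = v. Proof. by case: v. Qed.
Lemma MSs0 u : MS u [::] = u. Proof. by case: u. Qed.

Lemma lmax_gel x y : ~~ llt (lmax x y) x.
Proof. rewrite /lmax; case: ifP => [xy|_]; [exact: llt_asym|exact: llt_irr]. Qed.
Lemma lmax_ger x y : ~~ llt (lmax x y) y.
Proof. rewrite /lmax; case: ifP => [_|/negbT //]; exact: llt_irr. Qed.
Lemma lmax_lub x y B : ~~ llt B x -> ~~ llt B y -> ~~ llt B (lmax x y).
Proof. by rewrite /lmax; case: ifP. Qed.
Lemma lmax_lt x y B : llt x B -> llt y B -> llt (lmax x y) B.
Proof. by rewrite /lmax; case: ifP. Qed.

Lemma MS_ge1 a u v : ~~ llt (MS (a :: u) v) (a :: MS u v).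
Proof. case: v => [|b v]; first by rewrite !MSs0 llt_irr. by rewrite MS_cons lmax_gel. Qed.

Lemma MS_ge2 b u v : ~~ llt (MS u (b :: v)) (b :: MS u v).
Proof. case: u => [|a u]; first by rewrite !MS0s llt_irr. by rewrite MS_cons lmax_ger. Qed.

Lemma MS_le a u v B : ~~ llt B (a :: MS u v) ->
  (forall b v', v = b :: v' -> ~~ llt B (b :: MS (a :: u) v')) -> ~~ llt B (MS (a :: u) v).
Proof.
case: v => [|b v] H1 H2; first by rewrite MSs0 -(MSs0 u).
by rewrite MS_cons; apply: lmax_lub => //; apply: H2.
Qed.

Lemma MS_lt a u v B : llt (a :: MS u v) B ->
  (forall b v', v = b :: v' -> llt (b :: MS (a :: u) v') B) -> llt (MS (a :: u) v) B.
Proof.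
case: v => [|b v] H1 H2; first by rewrite MSs0 -(MSs0 u).
by rewrite MS_cons; apply: lmax_lt => //; apply: H2.
Qed.

Lemma llt_cons2 a u v : llt (a :: u) (a :: v) = llt u v.
Proof. by rewrite /= Order.POrderTheory.ltxx eqxx. Qed.

Lemma mem_shuffles_le u v t : t \in shuffles u v -> ~~ llt (MS u v) t.
Proof.
elim: u v t => [|a u IHu] v t; first by rewrite shuffles0s MS0s inE => /eqP->; exact: llt_irr.
elim: v t => [|b v IHv] t; first by rewrite shuffless0 MSs0 inE => /eqP->; exact: llt_irr.
rewrite shuffles_cons mem_cat => /orP[]/mapP[t' t'in ->].
- apply: le_trans _ (MS_ge1 _ _ _); rewrite llt_cons2; exact: IHu.
- apply: le_trans _ (MS_ge2 _ _ _); rewrite llt_cons2; exact: IHv.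
Qed.

Lemma shuffles_perm u v t : t \in shuffles u v -> perm_eq t (u ++ v).
Proof.
elim: u v t => [|a u IHu] v t; first by rewrite shuffles0s inE => /eqP->.
elim: v t => [|b v IHv] t; first by rewrite shuffless0 inE cats0 => /eqP->.
rewrite shuffles_cons mem_cat => /orP[]/mapP[t' t'in ->].
- by rewrite /= perm_cons; apply: IHu.
- rewrite -[b :: v]cat1s perm_sym (perm_catCA (a :: u) [:: b] v) /= perm_cons perm_sym; exact: IHv.
Qed.

Lemma shuffles_sym u v : perm_eq (shuffles u v) (shuffles v u).
Proof.
elim: u v => [|a u IHu] v; first by rewrite shuffles0s shuffless0.
elim: v => [|b v IHv]; first by rewrite shuffles0s shuffless0.
rewrite !shuffles_cons perm_catC perm_cat //; apply: perm_map; [exact: IHv|exact: IHu].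
Qed.


Lemma llt_ltcons a b u v : (a < b)%O -> llt (a :: u) (b :: v).
Proof. by move=> ab; rewrite /= ab. Qed.

Lemma lemQ p x y : ~~ llt x y -> ~~ llt (MS x (p ++ y)) (MS (p ++ x) y).
Proof.
elim: x p y => [|a x IHx] p y.
  by case: y => [|b y] // _; rewrite !cats0 MS0s MSs0 llt_irr.
move=> Hxy; elim: p => [|c p IHp]; first by rewrite llt_irr.
rewrite cat_cons; apply: MS_le.
  apply: le_trans (MS_ge2 _ _ _); rewrite llt_cons2; exact: IHp.
move=> b y' Ey; subst y.
apply: le_trans (MS_ge1 _ _ _).
case: (ltgtP a b) => [ab|ba|eab].
- by move: Hxy; rewrite /= ab.
- exact: llt_asym (llt_ltcons _ _ ba).
- subst b; rewrite llt_cons2.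
  have Hxy' : ~~ llt x y' by move: Hxy; rewrite llt_cons2.
  move: (IHx ((c :: p) ++ [:: a]) y' Hxy').
  by rewrite -!catA /= .
Qed.


Definition Sd x y := forall t, suffix t x -> t != [::] -> llt y t.

Lemma Sd_suffix x x' y : suffix x' x -> Sd x y -> Sd x' y.
Proof. by move=> sx H t st; apply: H; apply: suffix_trans st sx. Qed.

Lemma lemT s p z y : p != [::] -> Sd (p ++ s) (p ++ y) ->
  llt (MS (p ++ s ++ z) y) (s ++ z ++ p ++ y).
Proof.
elim: s p y => [|c' s IH] p y p0 HS.
  by move: (HS p); rewrite cats0 suffix_refl p0 => /(_ isT isT); rewrite (negbTE (nllt_prefix _ _)).
case: p p0 HS => [//|c p] _ HS.
have Hs : llt ((c :: p) ++ y) (c' :: s) by apply: HS => //; exact: suffix_suffix.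
have Hys : llt y (c' :: s).
  by move: (HS ((c :: p) ++ c' :: s) (suffix_refl _) isT); rewrite llt_catl.
rewrite cat_cons; apply: MS_lt => [|b y' Ey].
  case: (ltgtP c c') => [cc|cc|e].
  - exact: llt_ltcons.
  - by move: (llt_first Hs); rewrite cc.
  - subst c'; rewrite cat_cons llt_cons2.
    have Q := lemQ p (y := y) (x := (c :: s) ++ z).
    have Hq : ~~ llt ((c :: s) ++ z) y by apply: llt_asym; apply: llt_catr.
    apply: le_lt_trans (Q Hq) _.
    have := IH [:: c] (p ++ y) isT.
    rewrite /= -cat_cons; apply.
    apply: Sd_suffix HS; exact: suffix_suffix.
subst y.
case: (ltgtP b c') => [bc|bc|e].
- exact: llt_ltcons.
- by move: (llt_first Hys); rewrite bc.
- subst c'; rewrite llt_cons2.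
  have := IH ((c :: p) ++ [:: b]) y'.
  rewrite -!catA /=; apply => //.
Qed.


Lemma count_map_cons a r L :
  count_mem (a :: r) [seq a :: t | t <- L] = count_mem r L.
Proof. by rewrite count_map; apply: eq_count => t /=; rewrite eqseq_cons eqxx. Qed.

Lemma count_lt0 r L : (forall t, t \in L -> llt t r) -> count_mem r L = 0.
Proof.
move=> H; apply/count_memPn/negP => /H; by rewrite (negbTE (llt_irr r)).
Qed.

Lemma branch2_lt a b x y' t : Sd (a :: x) (b :: y') -> t \in shuffles (a :: x) y' ->
  llt (b :: t) (a :: x ++ b :: y').
Proof.
move=> HS tin.
have Hy : llt (b :: y') (a :: x) by apply: HS => //; exact: suffix_refl.
case: (ltgtP a b) => [ab|ba|e].
- by move: (llt_first Hy); rewrite ab.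
- exact: llt_ltcons.
- subst b; rewrite llt_cons2.
  apply: le_lt_trans (mem_shuffles_le tin) _.
  have := @lemT x [:: a] [::] y' isT; rewrite !cats0 /=; exact.
Qed.

Lemma lemS x y : y != [::] -> Sd x y ->
  (forall t, t \in shuffles x y -> ~~ llt (x ++ y) t) /\
  count_mem (x ++ y) (shuffles x y) = 1.
Proof.
elim: x y => [|a x IH] y y0 HS.
  by rewrite shuffles0s; split; [move=> t; rewrite inE => /eqP->; exact: llt_irr|rewrite /= eqxx].
case: y y0 HS => [//|b y'] _ HS.
have [IH1 IH2] := IH (b :: y') isT (Sd_suffix (suffix_cons _ _) HS).
have H2 := branch2_lt HS.
rewrite shuffles_cons; split.
  move=> t; rewrite mem_cat => /orP[]/mapP[t' t'in ->].
    by rewrite cat_cons llt_cons2; apply: IH1.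
  by apply: llt_asym; apply: H2.
rewrite count_cat cat_cons count_map_cons IH2 count_lt0 //.
by move=> t /mapP[t' t'in ->]; apply: H2.
Qed.


Lemma branch2_ltz a b s z y' t : Sd (a :: s) (b :: y') -> t \in shuffles (a :: s ++ z) y' ->
  llt (b :: t) (a :: s ++ z ++ b :: y').
Proof.
move=> HS tin.
have Hy : llt (b :: y') (a :: s) by apply: HS => //; exact: suffix_refl.
case: (ltgtP a b) => [ab|ba|e].
- by move: (llt_first Hy); rewrite ab.
- exact: llt_ltcons.
- subst b; rewrite llt_cons2.
  apply: le_lt_trans (mem_shuffles_le tin) _.
  have := @lemT s [:: a] z y' isT; rewrite /=; exact.
Qed.

Lemma suffix_size s1 s2 : suffix s1 s2 -> size s1 <= size s2.
Proof. by case/suffixP=> s ->; rewrite size_cat leq_addl. Qed.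

Lemma suffix_neq_size s1 s2 : suffix s1 s2 -> s1 != s2 -> size s1 < size s2.
Proof.
case/suffixP=> s ->; case: s => [|x s]; first by rewrite eqxx.
by move=> _; rewrite size_cat /= addSn ltnS leq_addl.
Qed.

Definition vpow v n := flatten (nseq n v).

Lemma vpowS v n : vpow v n.+1 = v ++ vpow v n. Proof. by []. Qed.
Lemma vpowSr v n : vpow v n.+1 = vpow v n ++ v.
Proof. elim: n => [|n IH]; first by rewrite /vpow /= cats0. by rewrite [LHS]vpowS [in LHS]IH catA -vpowS. Qed.
Lemma size_vpow v n : size (vpow v n) = n * size v.
Proof. elim: n => [|n IH]; first by []. by rewrite vpowS size_cat IH mulSn. Qed.

Definition Lyn v := forall t, suffix t v -> t != [::] -> t != v -> llt v t.

Lemma Lyn_strong v t : Lyn v -> suffix t v -> t != [::] -> t != v ->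
  forall x y, llt (v ++ x) (t ++ y).
Proof.
move=> L st t0 tv; case: (llt_split (L t st t0 tv)) => // [[r r0 E]].
by move: (suffix_size st); rewrite E size_cat -{2}[size v]addn0 leq_add2l leqn0 size_eq0 (negbTE r0).
Qed.

Lemma Lyn_Sd v s : Lyn v -> suffix s v -> s != v -> Sd s v.
Proof.
move=> L ss sv t st t0; have st' := suffix_trans st ss.
apply: L => //; apply/negP => /eqP E; move: (suffix_size st) (suffix_neq_size ss sv).
by rewrite E => a b; move: (leq_ltn_trans a b); rewrite ltnn.
Qed.

Definition Gp v s i :=
  (forall t, t \in shuffles (s ++ vpow v i) v -> ~~ llt (s ++ vpow v i.+1) t) /\
  count_mem (s ++ vpow v i.+1) (shuffles (s ++ vpow v i) v) = i.+1.

Section Pow.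
Variables (dd : X) (v' : seq X).
Local Notation v := (dd :: v').
Hypothesis L : Lyn v.

Lemma v'_neq : v' != v.
Proof. by apply/negP => /eqP E; move: (congr1 size E) => /= /eqP; rewrite -addn1 -[X in X == _]addn0 eqn_add2l. Qed.

Lemma Gnil0 : Gp v [::] 0.
Proof.
have E1 : vpow v 1 = v by rewrite /vpow /= cats0.
rewrite /Gp !cat0s E1 -[vpow v 0]/[::] shuffles0s; split; last by rewrite /= eqxx.
by move=> t; rewrite inE => /eqP->; exact: llt_irr.
Qed.

Lemma Gcons e s i : suffix (e :: s) v -> (e :: s) != v -> Gp v s i -> Gp v (e :: s) i.
Proof.
move=> ss sv [IH1 IH2].
have HS : Sd (e :: s) (dd :: v') by exact: Lyn_Sd.
have H2 t : t \in shuffles (e :: s ++ vpow v i) v' -> llt (dd :: t) ((e :: s) ++ vpow v i.+1).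
  by move=> tin; rewrite vpowSr cat_cons; apply: branch2_ltz HS tin.
rewrite /Gp !cat_cons shuffles_cons; split.
  move=> t; rewrite mem_cat => /orP[]/mapP[t' t'in ->].
    by rewrite llt_cons2; apply: IH1.
  by apply: llt_asym; rewrite -cat_cons; apply: H2.
rewrite count_cat count_map_cons IH2 count_lt0 ?addn0 //.
by move=> t /mapP[t' t'in ->]; rewrite -cat_cons; apply: H2.
Qed.

Lemma Gnil_succ i : Gp v v' i -> Gp v [::] i.+1.
Proof.
move=> [IH1 IH2].
have Sd1 : Sd v' (vpow v i.+1).
  move=> t st t0; have st' : suffix t v := suffix_trans st (suffix_cons _ _).
  have tv : t != v by apply/negP => /eqP E; move: (suffix_size st); rewrite E /= ltnn.
  by move: (Lyn_strong L st' t0 tv (vpow v i) [::]); rewrite cats0.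
have [S1 S2] := lemS (x := v') (y := vpow v i.+1) isT Sd1.
have P := shuffles_sym v (vpow v i.+1).
rewrite /Gp !cat0s; split.
  move=> t; rewrite -(perm_mem P) [vpow v i.+1]vpowS cat_cons shuffles_cons mem_cat.
  case/orP=> /mapP[t' t'in ->].
    by rewrite [vpow v i.+2]vpowS cat_cons llt_cons2; apply: S1.
  rewrite [vpow v i.+2]vpowS cat_cons llt_cons2; apply: IH1.
  by rewrite (perm_mem (shuffles_sym _ _)).
rewrite -(permP P) [vpow v i.+1]vpowS cat_cons shuffles_cons count_cat.
rewrite [vpow v i.+2]vpowS !cat_cons !count_map_cons.
rewrite -[dd :: v' ++ vpow v i]/(vpow v i.+1) S2.
by rewrite (permP (shuffles_sym _ _)) IH2.
Qed.

Lemma powG i s : suffix s v -> s != v -> Gp v s i.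
Proof.
elim: i s => [|i IHi] s.
  elim: s => [|e s IHs] ss sv; first exact: Gnil0.
  apply: Gcons => //; apply: IHs; first exact: (@catl_suffix _ [:: e] s _ ss).
  by apply/negP => /eqP E; move: (suffix_size ss); rewrite -E /= ltnn.
elim: s => [|e s IHs] ss sv.
  by apply: Gnil_succ; apply: IHi; [exact: suffix_cons|exact: v'_neq].
apply: Gcons => //; apply: IHs; first exact: (@catl_suffix _ [:: e] s _ ss).
by apply/negP => /eqP E; move: (suffix_size ss); rewrite -E /= ltnn.
Qed.

End Pow.


Lemma exists_min (l : seq (seq X)) : l != [::] ->
  exists2 m, m \in l & forall x, x \in l -> ~~ llt x m.
Proof.
elim: l => [//|y l IH] _; case: (eqVneq l [::]) => [->|l0].
  by exists y; rewrite ?inE // => x; rewrite inE => /eqP->; exact: llt_irr.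
case: (IH l0) => m min Hm.
case: (boolP (llt y m)) => ym.
  exists y; first by rewrite inE eqxx.
  move=> x; rewrite inE => /orP[/eqP->|xl]; first exact: llt_irr.
  apply/negP => xy; move: (Hm x xl); rewrite (llt_trans xy ym) //.
exists m; first by rewrite inE min orbT.
by move=> x; rewrite inE => /orP[/eqP->|/Hm].
Qed.


Lemma strip v u : v != [::] -> exists u' k, u = u' ++ vpow v k /\ ~~ suffix v u'.
Proof.
move=> v0; have [n Hn] := ubnP (size u); elim: n u Hn => [//|n IH] u Hu.
case: (boolP (suffix v u)) => [/suffixP[y Ey]|nsuf]; last first.
  by exists u, 0; rewrite /vpow /= cats0.
have Hy : size y < n.
  by move: Hu v0; rewrite Ey size_cat -size_eq0 -lt0n; apply: ar3.
case: (IH y Hy) => u' [k [Ey' ns]]; exists u', k.+1; split => //.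
by rewrite Ey Ey' vpowSr catA.
Qed.

Lemma suffix_cat_r s u V : suffix s u -> suffix (s ++ V) (u ++ V).
Proof. by case/suffixP=> y ->; rewrite -catA suffix_suffix. Qed.

Lemma lemA v u' j : v != [::] -> 0 < j ->
  (forall t, suffix t (u' ++ vpow v j) -> t != [::] -> ~~ llt t v) ->
  ~~ suffix v u' -> Sd u' (vpow v j).
Proof.
case: j => [//|j] v0 _ Ha nsuf.
have Vsuf : suffix (vpow v j.+1) (u' ++ vpow v j.+1) by exact: suffix_suffix.
have vsuf : suffix v (u' ++ vpow v j.+1) by rewrite vpowSr catA; exact: suffix_suffix.
move=> s; have [n Hn] := ubnP (size s); elim: n s Hn => [//|n IH] s Hs ss s0.
have Hsw : suffix (s ++ vpow v j.+1) (u' ++ vpow v j.+1) by exact: suffix_cat_r.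
have Hsw0 : s ++ vpow v j.+1 != [::] by case: (s) s0.
case/or3P: (llt_total s v) => [sv|/eqP E|vs].
- case: (llt_split sv) => [[q q0 Eq]|H].
  + have qsuf : suffix q (u' ++ vpow v j.+1) by apply: suffix_trans vsuf; rewrite Eq suffix_suffix.
    have qv : q != v.
      apply/negP => /eqP Eqv; move: (congr1 size Eq); rewrite size_cat Eqv.
      by move/eqP; rewrite -{1}[size v]add0n eqn_add2r eq_sym size_eq0 (negbTE s0).
    have vq := nllt_lt (Ha q qsuf q0) qv.
    case: (llt_split vq) => [[r r0 Er]|H].
      move: (congr1 size Eq); rewrite Er !size_cat => E.
      by move: s0; rewrite -size_eq0 (ar1 E).
    move: (H (vpow v j) [::]); rewrite cats0 -vpowS => Hq.
    have H' : llt (s ++ vpow v j.+1) (s ++ q) by rewrite llt_catl.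
    by move: (Ha _ Hsw Hsw0); rewrite -Eq in H'; rewrite H'.
  + by move: (Ha _ Hsw Hsw0); rewrite -[v]cats0 H.
- by move: nsuf; rewrite -E ss.
- case: (llt_split vs) => [[r r0 Er]|H].
  + have rsuf : suffix r u' by apply: suffix_trans ss; rewrite Er suffix_suffix.
    have Hr : size r < n by move: Hs v0; rewrite Er size_cat -size_eq0 -lt0n; apply: ar2.
    have IHr := IH r Hr rsuf r0.
    rewrite Er vpowS llt_catl; apply: llt_trans IHr.
    by rewrite vpowSr llt_prefix.
  + by rewrite -[s]cats0 vpowS H.
Qed.


Lemma powG' v : v != [::] -> Lyn v -> forall i s, suffix s v -> s != v -> Gp v s i.
Proof. by case: v => [//|dd v'] _ L i s; apply: powG. Qed.

Lemma nonlyndon_rel w : 0 < size w -> ~~ lyndon w ->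
  exists x y, [/\ x != [::], y != [::], x ++ y = w,
    (forall t, t \in shuffles x y -> ~~ llt w t) &
    0 < count_mem w (shuffles x y) <= size w].
Proof.
move=> w0 nL.
have [i1 [i10 i1w ni1]] : exists i, [/\ 0 < i, i < size w & ~~ llt w (drop i w)].
  move: nL; rewrite /lyndon w0 /= negb_forall => /existsP[i].
  by rewrite negb_imply => /andP[i0 H]; exists i.
have l0 : [seq drop i w | i <- iota 0 (size w)] != [::] by rewrite -size_eq0 size_map size_iota -lt0n.
case: (exists_min l0) => v0 /mapP[i0 i0in Ev0] Hmin {l0}.
rewrite mem_iota add0n in i0in; subst v0.
have Ha : forall t, suffix t w -> t != [::] -> ~~ llt t (drop i0 w).
  move=> t; rewrite suffixE => /eqP Et t0; apply: Hmin; apply/mapP.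
  exists (size w - size t); last by rewrite Et.
  rewrite mem_iota add0n; apply: ar4; first by rewrite lt0n size_eq0.
  by rewrite -Et size_drop leq_subr.
have i00 : 0 < i0.
  rewrite lt0n; apply/negP => /eqP E.
  have H : drop i1 w \in [seq drop i w | i <- iota 0 (size w)].
    by apply/mapP; exists i1; rewrite // mem_iota add0n.
  have H2 := Hmin _ H.
  rewrite E drop0 in H2.
  case/or3P: (llt_total w (drop i1 w)) => [|/eqP Ew|]; first by rewrite (negbTE ni1).
    by move: (congr1 size Ew); rewrite size_drop => /esym; apply: ar5.
  by rewrite (negbTE H2).
set v := drop i0 w in Ha.
have v0 : v != [::] by rewrite -size_eq0 size_drop subn_eq0 -ltnNge.
have Lv : Lyn v.
  move=> t st t0 tv; apply: nllt_lt; last exact: tv.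
  apply: Ha t0; apply: (suffix_trans st); rewrite /v -{2}(cat_take_drop i0 w); exact: suffix_suffix.
have Ew : w = take i0 w ++ v by rewrite cat_take_drop.
case: (strip (take i0 w) v0) => u' [k [Eu ns]].
rewrite Eu -catA -vpowSr in Ew.
have Ha' : forall t, suffix t (u' ++ vpow v k.+1) -> t != [::] -> ~~ llt t v by rewrite -Ew.
have sv : 0 < size v by rewrite lt0n size_eq0.
case: (eqVneq u' [::]) => [u0|u0].
  subst u'; rewrite cat0s in Ew.
  case: k Ew {Eu Ha'} => [|k] Ew.
    have : size v = size w by rewrite Ew /vpow /= cats0.
    by rewrite /v size_drop => E; case: (ar5 i00 (andP i0in).2 E).
  have v0e : [::] != v by rewrite eq_sym.
  have [G1 G2] := powG' v0 Lv k.+1 (suffix0s v) v0e.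
  rewrite !cat0s -Ew in G1 G2.
  have y0 : vpow v k.+1 != [::] by rewrite -size_eq0 size_vpow muln_eq0 negb_or /= -lt0n sv.
  exists v, (vpow v k.+1); split.
  - exact: v0.
  - exact: y0.
  - by rewrite -vpowS -Ew.
  - by move=> t; rewrite (perm_mem (shuffles_sym _ _)); apply: G1.
  - rewrite (permP (shuffles_sym _ _)) G2 Ew size_vpow /=.
    by rewrite leq_pmulr.
have y0 : vpow v k.+1 != [::] by rewrite -size_eq0 size_vpow muln_eq0 negb_or /= -lt0n sv.
have [S1 S2] := lemS y0 (lemA v0 (ltn0Sn k) Ha' ns).
rewrite -Ew in S1 S2.
exists u', (vpow v k.+1); split => //.
by rewrite S2 w0.
Qed.

End Words.

Section Alg.
Import GRing.Theory.
Local Open Scope ring_scope.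
Variables (d : Order.disp_t) (X : orderType d) (p s : nat).

Notation ZW := (Zword X).

Definition Good (f : ZW) := exists (c : seq (int * seq X)) (m g : ZW),
  [/\ all (fun t => lyndon t.2 && (size t.2 == s)) c, in_M m &
      f = \sum_(t <- c) (<< t.2 >> *~ t.1) + m + g *+ p].

Lemma in_M0 : in_M (0 : ZW).
Proof. by exists [::]; rewrite big_nil. Qed.

Lemma in_MD (a b : ZW) : in_M a -> in_M b -> in_M (a + b).
Proof.
case=> [l1 [H1 ->]] [l2 [H2 ->]]; exists (l1 ++ l2).
by rewrite all_cat H1 H2 big_cat.
Qed.

Lemma in_MZ (a : ZW) z : in_M a -> in_M (a *~ z).
Proof.
case=> [l [H ->]]; exists [seq (t.1 * z, t.2) | t <- l]; split.
  by rewrite all_map; apply: sub_all H => t.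
rewrite big_map mulrz_suml; apply: eq_bigr => t _ /=.
by rewrite mulrzA.
Qed.

Lemma in_M_shuffle (x y : seq X) : x != [::] -> y != [::] -> in_M (shuffle x y).
Proof.
move=> x0 y0; exists [:: (1, (x, y))]; split; first by rewrite /= -!size_eq0 -!lt0n in x0 y0 *; rewrite x0 y0.
by rewrite big_seq1.
Qed.

Lemma Good0 : Good 0.
Proof. by exists [::], 0, 0; rewrite big_nil mul0rn !addr0; split => //; exact: in_M0. Qed.

Lemma GoodD f1 f2 : Good f1 -> Good f2 -> Good (f1 + f2).
Proof.
case=> [c1 [m1 [g1 [H1 M1 ->]]]] [c2 [m2 [g2 [H2 M2 ->]]]].
exists (c1 ++ c2), (m1 + m2), (g1 + g2); split.
- by rewrite all_cat H1 H2.
- exact: in_MD.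
- by rewrite big_cat mulrnDl addrACA [X in X + _]addrACA.
Qed.

Lemma GoodZ f z : Good f -> Good (f *~ z).
Proof.
case=> [c [m [g [H M ->]]]].
exists [seq (t.1 * z, t.2) | t <- c], (m *~ z), (g *~ z); split.
- by rewrite all_map; apply: sub_all H => t.
- exact: in_MZ.
- rewrite !mulrzDl big_map mulrz_suml; congr (_ + _ + _).
    by apply: eq_bigr => t _; rewrite mulrzA.
  by rewrite !pmulrn -!mulrzA mulrC.
Qed.

Lemma GoodMn f n : Good f -> Good (f *+ n).
Proof. by rewrite pmulrn; apply: GoodZ. Qed.

Lemma GoodN f : Good f -> Good (- f).
Proof. by rewrite -mulrN1z; apply: GoodZ. Qed.

Lemma GoodP g : Good (g *+ p).
Proof. by exists [::], 0, g; rewrite big_nil !add0r; split => //; exact: in_M0. Qed.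

Lemma GoodM m : in_M m -> Good m.
Proof. by move=> M; exists [::], m, 0; rewrite big_nil add0r mul0rn addr0; split. Qed.

Lemma GoodL w : lyndon w -> size w = s -> Good << w >>.
Proof.
move=> L sw; exists [:: (1, w)], 0, 0; split.
- by rewrite /= L sw eqxx.
- exact: in_M0.
- by rewrite big_seq1 mul0rn !addr0 mulr1z.
Qed.

Lemma Good_sum (I : Type) (r : seq I) (P : pred I) (F : I -> ZW) :
  (forall i, P i -> Good (F i)) -> Good (\sum_(i <- r | P i) F i).
Proof.
move=> H; elim: r => [|i r IH]; first by rewrite big_nil; exact: Good0.
rewrite big_cons; case: ifP => Pi //; apply: GoodD => //; exact: H.
Qed.

End Alg.

Section Main.
Import GRing.Theory.
Local Open Scope ring_scope.
Variables (d : Order.disp_t) (X : orderType d) (p s : nat).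
Hypotheses (pp : prime p) (s1 : (1 <= s)%N) (sp : (s < p)%N).

Notation llt := (@lex_lt d X).

Lemma sum_const_seq (I : eqType) (r : seq I) (P : pred I) (c : Zword X) :
  \sum_(i <- r | P i) c = c *+ count P r.
Proof.
elim: r => [|i r IH]; first by rewrite big_nil.
by rewrite big_cons IH /=; case: (P i); rewrite ?add0n // mulrS.
Qed.

Lemma count_lt_strict (L : seq (seq X)) r t : llt r t -> r \in L ->
  (count (fun x => llt x r) L < count (fun x => llt x t) L)%N.
Proof.
move=> rt; elim: L => [//|z L IH]; rewrite inE => /orP[/eqP<-|rL] /=.
  rewrite (negbTE (llt_irr r)) rt add0n add1n ltnS; apply: sub_count => x xr.
  exact: llt_trans xr rt.
rewrite -addnS; apply: leq_add; last exact: IH.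
case: (boolP (llt z r)) => // zr.
by rewrite (llt_trans zr rt).
Qed.

Lemma inv_mod k : (0 < k)%N -> (k < p)%N -> exists k' q, (k * k' = 1 + q * p)%N.
Proof.
move=> k0 kp; case: (egcdnP p k0) => km kn E _.
have cop : coprime k p by rewrite coprime_sym prime_coprime // gtnNdvd.
move: E; rewrite (eqP cop) => E.
by exists km, kn; rewrite mulnC E addnC.
Qed.

Lemma Good_word w : size w = s -> @Good d X p s << w >>.
Proof.
move=> sw; set L := permutations w.
suff H : forall n t, perm_eq t w -> (count (fun x => llt x t) L < n)%N -> @Good d X p s << t >>.
  by apply: (H _ w (perm_refl w) (ltnSn _)).
elim=> [//|n IH] t pt Hc.
have st : size t = s by rewrite (perm_size pt).
case: (boolP (lyndon t)) => Lt; first exact: GoodL.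
have t0 : (0 < size t)%N by rewrite st.
have [x [y [x0 y0 Ext Hmax Hk]]] := nonlyndon_rel t0 Lt.
set k := count_mem t (shuffles x y) in Hk.
pose R : Zword X := \sum_(r <- shuffles x y | r != t) << r >>.
have Dec : << t >> *+ k = shuffle x y - R.
  rewrite /shuffle (bigID (fun r => r == t)) /= addrK.
  rewrite (eq_bigr (fun=> << t >>)); last by move=> r /eqP->.
  by rewrite sum_const_seq.
have [k' [q Ek]] : exists k' q, (k * k' = 1 + q * p)%N.
  by apply: inv_mod; case/andP: Hk => // _ kt; apply: leq_ltn_trans kt _; rewrite st.
have Et : << t >> = (shuffle x y - R) *+ k' + (- (<< t >> *+ q)) *+ p.
  by rewrite -Dec -mulrnA Ek mulrnDr mulr1n mulNrn mulrnA addrK.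
rewrite Et; apply: GoodD; last exact: GoodP.
apply: GoodMn; apply: GoodD; first by apply: GoodM; apply: in_M_shuffle.
apply: GoodN; rewrite /R big_seq_cond; apply: Good_sum => r /andP[rin rt].
have prw : perm_eq r w by apply: perm_trans (shuffles_perm rin) _; rewrite Ext.
apply: IH => //.
have lrt : llt r t by apply: nllt_lt (Hmax r rin) _; rewrite eq_sym.
apply: leq_trans (count_lt_strict lrt _) _; first by rewrite mem_permutations.
by rewrite -ltnS.
Qed.

End Main.

Theorem proposition6p2 (p : nat) (d : Order.disp_t) (X : orderType d)
    (x0 : X) (s : nat) :
  prime p -> (1 <= s)%N -> (s < p)%N -> lyndon_generate_mod X p s.
Proof.
move=> pp s1 sp f hf.
suff [c [m [g [H1 H2 H3]]]] : @Good d X p s f by exists c, m, g.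
rewrite -(freeg_sumE f) big_seq; apply: Good_sum => z zin.
have sz : size z = s.
  case: (eqVneq (size z) s) => // ne; move: zin.
  by rewrite mem_dom hf // eqxx.
rewrite -[coeff z f]intz -freegU_mulz; apply: GoodZ.
exact: Good_word.
Qed.
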